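(* $\kappa_4(S_4^2)\geqslant 10$ and $\kappa_5(S_4^2)\geqslant 12$.
   Context: For an integer $\ell\geqslant 2$, $\kappa_\ell(G)$ is the minimum number of vertices whose removal from $G$ results in a disconnected graph with at least $\ell$ components or a graph with fewer than $\ell$ vertices. $S_4^2$ is the split-star: vertex set all permutations $p=p_1p_2p_3p_4$ of $\{1,2,3,4\}$, with $p$ adjacent to $p\mathrm{g}_{12}$ (swap symbols at positions 1 and 2) and to $p\mathrm{g}_i^+$, $p\mathrm{g}_i^-$ for $i\in\{3,4\}$, where $p\mathrm{g}_i^+$ places $p_i,p_1,p_2$ at positions $1,2,i$ and $p\mathrm{g}_i^-$ places $p_2,p_i,p_1$ at positions $1,2,i$ (other positions unchanged). *)

(* Defs.v *)
From mathcomp Require Import all_boot all_fingroup.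
Set Implicit Arguments. Unset Strict Implicit. Unset Printing Implicit Defensive.

Section Kappa.
Variables (T : finType) (e : rel T).

Definition del_rel (S : {set T}) : rel T :=
  fun x y => [&& x \notin S, y \notin S & e x y].

Definition components (S : {set T}) : {set {set T}} :=
  [set [set y | (y \notin S) && connect (del_rel S) x y] | x in ~: S].

Definition lcut (l : nat) (S : {set T}) : bool :=
  (l <= #|components S|) || (#|~: S| < l).

(* kappa_l(G) : minimum size of such an S (the whole vertex set always qualifies
   when l >= 1) *)
Definition kappa (l : nat) : nat :=
  \big[minn/#|T|]_(S : {set T} | lcut l S) #|S|.
End Kappa.

(* vertices: permutations p of 'I_4; position i (1-based in the paper) is
   index i-1, and p_i is p (i-1); symbols {1,2,3,4} are relabelled {0,1,2,3}. *)
Definition posmap (l : seq nat) : 'I_4 -> 'I_4 := fun j => inord (nth 0 l j).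

Definition g12  := posmap [:: 1; 0; 2; 3].
Definition g3p  := posmap [:: 2; 0; 1; 3].
Definition g3m  := posmap [:: 1; 2; 0; 3].
Definition g4p  := posmap [:: 3; 0; 2; 1].
Definition g4m  := posmap [:: 1; 3; 2; 0].

Definition S42_adj : rel {perm 'I_4} :=
  fun p q => has (fun s : 'I_4 -> 'I_4 => [forall j, q j == p (s j)])
                 [:: g12; g3p; g3m; g4p; g4m].

(* Main.v *)
Require Import Defs.
From mathcomp Require Import all_boot all_fingroup zify.
Set Implicit Arguments. Unset Strict Implicit. Unset Printing Implicit Defensive.


Section Chk.
Variable n : nat.
Variable cam : seq (seq bool).
Definition e (x y : nat) : bool := nth false (nth [::] cam x) y.
Fixpoint orm (a b : seq bool) : seq bool :=
  match a, b with
  | x :: a', y :: b' => (x || y) :: orm a' b'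
  | _, _ => [::]
  end.
Definition upd (st : seq bool) (x : nat) := orm st (nth [::] cam x).
Fixpoint pc {St : Type} (f : St -> nat -> St) (ok : St -> bool) (t : nat) (acc : seq nat) (st : St) (s : seq nat) {struct s} : seq (seq nat) :=
  match t with
  | 0 => [:: acc]
  | t'.+1 => match s with
             | [::] => [::]
             | x :: s' => (let st' := f st x in if ok st' then pc f ok t' (x :: acc) st' s' else [::]) ++ pc f ok t acc st s'
             end
  end.
Definition nbh (C V : seq nat) : seq nat := [seq y <- V | (y \notin C) && has (fun x => e x y) C].
Fixpoint chk (l : nat) (V : seq nat) (k mn : nat) : bool :=
  match l with
  | 0 => false
  | l'.+1 =>
    match l' with
    | 0 => size V < mn
    | _ => let Vc := mkseq (fun y => y \notin V) n in
       all (fun t => if size V < t * l'.+1 then true else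
               all (fun C => let NC := nbh C V in let m := size NC in
                    if k < m then true else if size V < t * l'.+1 + m then true else
                    chk l' [seq y <- V | (y \notin C) && (y \notin NC)] (k - m) t)
                   (let th := minn (n - t * l') (n + t + k - size V) in pc upd (fun st => count id st <= th) t [::] Vc V))
             (iota mn (size V).+1)
    end
  end.

Lemma chkE l'' V k mn : chk l''.+2 V k mn =
  all (fun t => if size V < t * l''.+2 then true else
               all (fun C => let NC := nbh C V in let m := size NC in
                    if k < m then true else if size V < t * l''.+2 + m then true else
                    chk l''.+1 [seq y <- V | (y \notin C) && (y \notin NC)] (k - m) t)
                   (let th := minn (n - t * l''.+1) (n + t + k - size V) in pc upd (fun st => count id st <= th) t [::] (mkseq (fun y => y \notin V) n) V))
             (iota mn (size V).+1).
Proof. by []. Qed.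

Lemma pc_complete {St : Type} (f : St -> nat -> St) (ok : St -> bool) s :
  forall t acc st C, subseq C s -> size C = t ->
  (forall m, 0 < m <= t -> ok (foldl f st (take m C))) ->
  rev C ++ acc \in pc f ok t acc st s.
Proof.
elim: s => [|x s IH] t acc st C.
  by rewrite subseq0 => /eqP -> <- _ /=; rewrite mem_seq1.
case: t => [|t].
  by case: C => // _ _ _ /=; rewrite mem_seq1.
case: C => [//|c C] /=.
case: eqP => [->|_] Hs [Hsz] Hok; rewrite mem_cat; apply/orP.
  left; have H1 : ok (f st x) by have := Hok 1 isT; rewrite /= take0.
  rewrite H1 rev_cons cat_rcons; apply: IH => // m /andP [Hm1 Hm2].
  apply: (Hok m.+1). lia.
right; apply: (IH t.+1 acc st (c :: C)) => //=; by rewrite Hsz.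
Qed.

Lemma nth_orm a b y : size a = size b -> nth false (orm a b) y = nth false a y || nth false b y.
Proof.
elim: a b y => [|x a IH] [|z b] [|y] //= [Hs]; by rewrite ?nth_nil ?IH.
Qed.

Hypothesis Hcam : forall x, x < n -> size (nth [::] cam x) = n.

Lemma foldl_upd D st : all (fun x => x < n) D -> size st = n ->
  size (foldl upd st D) = n /\
  forall y, nth false (foldl upd st D) y = nth false st y || has (fun x => e x y) D.
Proof.
elim: D st => [|x D IH] st /=; first by move=> _ ->; split=> // y; rewrite orbF.
move=> /andP [Hx HD] Hst.
have Hso : forall a b, size a = size b -> size (orm a b) = size a.
  by elim=> [|z a IHa] [|w b] //= [Hs]; rewrite IHa.
have Hs' : size (upd st x) = n by rewrite /upd Hso Hst ?Hcam.
have [H1 H2] := IH _ HD Hs'; split => // y.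
by rewrite H2 /upd nth_orm ?Hst ?Hcam // orbA.
Qed.

Lemma count_id_nth s : count id s = count (nth false s) (iota 0 (size s)).
Proof. by rewrite -{1}(mkseq_nth false s) /mkseq count_map. Qed.

Lemma count_orC (T : Type) (a b : pred T) s :
  count (fun y => ~~ a y || b y) s = count (predC a) s + count (fun y => a y && b y) s.
Proof. by elim: s => //= x s ->; case: (a x); case: (b x) => /=; lia. Qed.

Lemma count_split (T : Type) (a p : pred T) s :
  count a s = count (predI a p) s + count (predI a (predC p)) s.
Proof. by elim: s => //= x s ->; case: (a x); case: (p x) => /=; lia. Qed.

Lemma count_mask D V Q : V = filter Q (iota 0 n) -> all (fun x => x < n) D ->
  count id (foldl upd (mkseq (fun y => y \notin V) n) D) =
  n - size V + count (fun y => has (fun x => e x y) D) V.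
Proof.
move=> HV HD.
have Hs0 : size (mkseq (fun y => y \notin V) n) = n by rewrite size_mkseq.
have [H1 H2] := foldl_upd HD Hs0.
rewrite count_id_nth H1.
rewrite (eq_in_count (a2 := fun y => ~~ (y \in V) || has (fun x => e x y) D)); last first.
  by move=> y; rewrite mem_iota /= => Hy; rewrite H2 nth_mkseq.
rewrite count_orC.
have HcV : count (mem V) (iota 0 n) = size V.
  rewrite HV size_filter; apply: eq_in_count => y Hy /=.
  by rewrite mem_filter Hy andbT.
have := count_predC (mem V) (iota 0 n); rewrite size_iota HcV => HC.
have -> : count (predC (mem V)) (iota 0 n) = n - size V by lia.
congr (_ + _); rewrite HV count_filter; apply: eq_in_count => y Hy /=.
by rewrite mem_filter Hy andbT andbC.
Qed.

Lemma argmin_ex (f : nat -> nat) L : 0 < L -> exists2 j, j < L & forall i, i < L -> f j <= f i.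
Proof.
elim: L => // [[|L]] IH _.
  by exists 0 => // i; rewrite ltnS leqn0 => /eqP ->.
have [j Hj Hmin] := IH isT.
case: (leqP (f j) (f L.+1)) => H.
  exists j; first by apply: ltnW.
  move=> i; rewrite ltnS leq_eqVlt => /orP [/eqP ->|]; [done|exact: Hmin].
exists L.+1 => // i; rewrite ltnS leq_eqVlt => /orP [/eqP ->|Hi]; first done.
by apply: leq_trans (ltnW H) (Hmin i Hi).
Qed.

Lemma classes_sum (S : pred nat) (c : nat -> nat) V t L :
  (forall i, i < L -> t <= count (fun x => ~~ S x && (c x == i)) V) ->
  L * t <= count (fun x => ~~ S x && (c x < L)) V.
Proof.
elim: L => [|L IH] H; first by rewrite mul0n.
have H1 := IH (fun i Hi => H i (ltnW Hi)).
have H2 := H L (ltnSn L).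
have := count_predUI (fun x => ~~ S x && (c x < L)) (fun x => ~~ S x && (c x == L)) V.
rewrite (eq_count (a1 := predI _ _) (a2 := pred0)); last first.
  by move=> x /=; case: (S x); case: ltngtP.
rewrite count_pred0 addn0.
rewrite (eq_count (a1 := predU _ _) (a2 := fun x => ~~ S x && (c x < L.+1))); last first.
  by move=> x /=; rewrite ltnS (leq_eqVlt (c x)) -andb_orr orbC.
rewrite mulSn; lia.
Qed.

Lemma sub_in_count (T : eqType) (a1 a2 : pred T) s :
  {in s, forall x, a1 x -> a2 x} -> count a1 s <= count a2 s.
Proof.
elim: s => //= x s IH H.
have H' : {in s, forall y, a1 y -> a2 y} by move=> y Hy; apply: H; rewrite inE Hy orbT.
have Hx := H x (mem_head x s).
apply: leq_add; last exact: IH.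
by case: (a1 x) Hx => // ->.
Qed.

Lemma chk_sound l : forall V k mn, chk l V k mn -> forall Q, V = filter Q (iota 0 n) ->
  forall (S : pred nat) (c : nat -> nat), count S V <= k ->
  (forall i, i < l -> mn <= count (fun x => ~~ S x && (c x == i)) V) ->
  (forall x y, x \in V -> y \in V -> ~~ S x -> ~~ S y -> e x y -> c x = c y) -> False.
Proof.
elim: l => [//|l' IH] V k mn.
case: l' IH => [|l''] IH.
  move=> /= Hlt Q HV S c Hk Hcl _.
  have := Hcl 0 isT; have := count_size (fun x => ~~ S x && (c x == 0)) V; lia.
set l' := l''.+1.
move=> Hchk Q HV S c Hk Hcl Hclos.
pose cls i := fun x => ~~ S x && (c x == i).
have [j Hj Hmin] := argmin_ex (fun i => count (cls i) V) (isT : 0 < l'.+1).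
set t := count (cls j) V in Hmin.
pose C := filter (cls j) V.
have HsC : size C = t by rewrite size_filter.
have Hsum : l'.+1 * t <= count (predC S) V.
  apply: leq_trans (classes_sum (fun i Hi => Hmin i Hi)) _.
  by apply: sub_count => x /= /andP [].
pose NC := nbh C V.
have HNS : forall y, y \in NC -> S y.
  move=> y; rewrite mem_filter => /andP [/andP [HyC /hasP [x HxC Hxy]] HyV].
  apply/negPn/negP => HSy.
  move: (HxC); rewrite mem_filter => /andP [/andP [HSx /eqP Hcx] HxV].
  have Hcy := Hclos x y HxV HyV HSx HSy Hxy.
  by move/negP: HyC; apply; rewrite mem_filter /cls HSy -Hcy Hcx eqxx HyV.
have HVn : size V <= n by rewrite HV size_filter -{2}(size_iota 0 n) count_size.
pose Pnb := fun y => (y \notin C) && has (fun x => e x y) C.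
have HNC : size NC = count Pnb V by rewrite size_filter.
have Hm : size NC <= count S V.
  rewrite HNC (eq_in_count (a2 := predI Pnb S)); first by apply: sub_count => y /andP [].
  move=> y HyV; have -> : predI Pnb S y = Pnb y && S y by [].
  case HP: (Pnb y) => //=; apply/esym/HNS.
  by rewrite /NC /nbh mem_filter HyV andbT; exact: HP.
have HkS := count_predC S V.
have HcC : count (mem C) V = t.
  rewrite -HsC size_filter; apply: eq_in_count => y HyV.
  by rewrite /= mem_filter HyV andbT.
move: Hchk; rewrite chkE => /allP Hall.
have Ht : t \in iota mn (size V).+1.
  rewrite mem_iota; have := Hcl j Hj; have := count_size (cls j) V; rewrite -/t; lia.
move: (Hall t Ht).
set u := t * l'.
have Hu : l'.+1 * t = u + t by rewrite mulSn addnC mulnC.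
have HtL : t * l'.+1 = u + t by rewrite mulnC.
rewrite HtL ifN; last by rewrite -leqNgt; lia.
move=> /allP Hall2.
have Hin : rev C \in pc upd (fun st => count id st <= minn (n - u) (n + t + k - size V)) t [::] (mkseq (fun y => y \notin V) n) V.
  rewrite -[rev C]cats0; apply: pc_complete => //; first exact: filter_subseq.
  move=> m /andP [Hm0 Hmt].
  have HD : all (fun x => x < n) (take m C).
    apply/allP => x /mem_take; rewrite mem_filter HV mem_filter mem_iota.
    by case/andP => _ /andP [_ /andP [_]].
  rewrite (count_mask HV HD).
  have H1 : count (fun y => has (fun x => e x y) (take m C)) V <= count (fun y => has (fun x => e x y) C) V.
    apply: sub_count => y /hasP [x /mem_take Hx H]; apply/hasP; by exists x.
  have H2 : count (fun y => has (fun x => e x y) C) V <= t + count Pnb V.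
    rewrite [X in X <= _](count_split _ (mem C)) -HcC; apply: leq_add; apply: sub_count => y /=.
      by case/andP.
    by rewrite /Pnb andbC.
  rewrite leq_min; apply/andP; split; lia.
move: (Hall2 _ Hin) => /=.
have Hnr : nbh (rev C) V = NC by rewrite /nbh; apply: eq_filter => y; rewrite mem_rev has_rev.
rewrite Hnr ifN; last by rewrite -leqNgt; lia.
rewrite ifN; last by rewrite -leqNgt; lia.
set R := fun y => (y \notin rev C) && (y \notin NC).
move=> Hchk2.
pose sigma := fun a => if a == j then l' else if a == l' then j else a.
have sigmaK : forall a, sigma (sigma a) = a.
  move=> a; rewrite /sigma.
  case: (a =P j) => [->|Haj]; first by case: (l' =P j) => [->|_]; rewrite ?eqxx.
  case: (a =P l') => [->|Hal]; first by rewrite eqxx.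
  by move/eqP/negbTE: Haj => ->; move/eqP/negbTE: Hal => ->.
pose c' := fun x => sigma (c x).
apply: (IH _ _ _ Hchk2 (predI R Q) _ S c').
- by rewrite HV; exact: (esym (filter_predI R Q (iota 0 n))).
- rewrite count_filter.
  have : count (predI S R) V + count Pnb V <= count S V.
    rewrite [X in _ <= X](count_split _ R); apply: leq_add => //.
    rewrite (eq_in_count (a2 := predI Pnb S)); last first.
      move=> y HyV; have -> : predI Pnb S y = Pnb y && S y by [].
      case HP: (Pnb y) => //=; apply/esym/HNS.
      by rewrite /NC /nbh mem_filter HyV andbT; exact: HP.
    apply: sub_in_count => y HyV /= /andP [HP HS]; rewrite HS /R /= negb_and !negbK.
    by apply/orP; right; rewrite /NC /nbh mem_filter HyV andbT; exact: HP.
  lia.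
- move=> i Hi.
  pose i' := sigma i.
  have Hil : i != l' by rewrite neq_ltn Hi.
  have Hi' : i' < l'.+1.
    rewrite /i' /sigma; case: (i == j) => //; rewrite (negbTE Hil); exact: ltnW.
  have Hij : i' != j.
    apply/negP => /eqP Hx; have := sigmaK i; rewrite -/i' Hx /sigma eqxx => Hl.
    by move: Hil; rewrite Hl eqxx.
  have Heq : forall x, (c' x == i) = (c x == i').
    by move=> x; rewrite /c' /i'; apply/eqP/eqP => [<-|->]; rewrite sigmaK.
  rewrite count_filter (eq_count (a2 := predI (fun x => ~~ S x && (c x == i')) R)); last first.
    by move=> x /=; rewrite Heq.
  rewrite (eq_in_count (a2 := fun x => ~~ S x && (c x == i'))); first exact: Hmin.
  move=> x HxV /=; case HP: (~~ S x && (c x == i')) => //=.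
  move/andP: HP => [HSx /eqP Hcx].
  rewrite /R mem_rev mem_filter /cls Hcx (negbTE Hij) /= andbF /=.
  by apply/negP => /HNS; apply/negP.
- move=> x y; rewrite !mem_filter => /andP [_ HxV] /andP [_ HyV] HSx HSy Hxy.
  by rewrite /c' (Hclos x y HxV HyV HSx HSy Hxy).
Qed.
End Chk.

Definition cam : seq (seq bool) := [::
  [:: true; true; false; true; true; false; false; false; false; false; false; false; false; false; false; true; false; false; false; false; true; false; false; false];
  [:: true; true; true; false; false; true; false; false; false; false; false; false; false; false; true; false; false; false; false; false; false; true; false; false];
  [:: false; true; true; true; false; true; false; false; false; true; false; false; false; false; false; false; false; false; false; false; false; false; true; false];
  [:: true; false; true; true; true; false; false; false; true; false; false; false; false; false; false; false; false; false; false; false; false; false; false; true];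
  [:: true; false; false; true; true; true; false; false; false; false; false; true; false; false; false; false; true; false; false; false; false; false; false; false];
  [:: false; true; true; false; true; true; false; false; false; false; true; false; false; false; false; false; false; true; false; false; false; false; false; false];
  [:: false; false; false; false; false; false; true; true; false; true; true; false; false; true; false; false; false; false; true; false; false; false; false; false];
  [:: false; false; false; false; false; false; true; true; true; false; false; true; true; false; false; false; false; false; false; true; false; false; false; false];
  [:: false; false; false; true; false; false; false; true; true; true; false; true; false; false; false; false; false; false; false; false; false; false; false; true];
  [:: false; false; true; false; false; false; true; false; true; true; true; false; false; false; false; false; false; false; false; false; false; false; true; false];
  [:: false; false; false; false; false; true; true; false; false; true; true; true; false; false; false; false; false; true; false; false; false; false; false; false];
  [:: false; false; false; false; true; false; false; true; true; false; true; true; false; false; false; false; true; false; false; false; false; false; false; false];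
  [:: false; false; false; false; false; false; false; true; false; false; false; false; true; true; false; true; true; false; false; true; false; false; false; false];
  [:: false; false; false; false; false; false; true; false; false; false; false; false; true; true; true; false; false; true; true; false; false; false; false; false];
  [:: false; true; false; false; false; false; false; false; false; false; false; false; false; true; true; true; false; true; false; false; false; true; false; false];
  [:: true; false; false; false; false; false; false; false; false; false; false; false; true; false; true; true; true; false; false; false; true; false; false; false];
  [:: false; false; false; false; true; false; false; false; false; false; false; true; true; false; false; true; true; true; false; false; false; false; false; false];
  [:: false; false; false; false; false; true; false; false; false; false; true; false; false; true; true; false; true; true; false; false; false; false; false; false];
  [:: false; false; false; false; false; false; true; false; false; false; false; false; false; true; false; false; false; false; true; true; false; true; true; false];
  [:: false; false; false; false; false; false; false; true; false; false; false; false; true; false; false; false; false; false; true; true; true; false; false; true];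
  [:: true; false; false; false; false; false; false; false; false; false; false; false; false; false; false; true; false; false; false; true; true; true; false; true];
  [:: false; true; false; false; false; false; false; false; false; false; false; false; false; false; true; false; false; false; true; false; true; true; true; false];
  [:: false; false; true; false; false; false; false; false; false; true; false; false; false; false; false; false; false; false; true; false; false; true; true; true];
  [:: false; false; false; true; false; false; false; false; true; false; false; false; false; false; false; false; false; false; false; true; true; false; true; true]].


Definition dig (n j : nat) := (n %/ 4 ^ j) %% 4.
Definition code (a b c d : nat) := a + b * 4 + c * 16 + d * 64.
Definition Vlit := [seq n <- iota 0 256 | uniq (map (dig n) (iota 0 4))].
Definition gl := [:: [:: 1;0;2;3]; [::2;0;1;3]; [::1;2;0;3]; [::3;0;2;1]; [::1;3;2;0]].
Definition e_code (n m : nat) := has (fun sl => all (fun j => dig m j == dig n (nth 0 sl j)) (iota 0 4)) gl.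
Definition o (j : nat) : 'I_4 := inord j.
Definition phi (p : {perm 'I_4}) : nat := code (p (o 0)) (p (o 1)) (p (o 2)) (p (o 3)).

Lemma dig_code a b c d : a < 4 -> b < 4 -> c < 4 -> d < 4 ->
  map (dig (code a b c d)) (iota 0 4) = [:: a; b; c; d].
Proof. move=> Ha Hb Hc Hd; rewrite /= /dig /code /=; congr [:: _; _; _; _]; lia. Qed.

Lemma dig_phi p j : j < 4 -> dig (phi p) j = p (o j).
Proof.
move=> Hj.
have := dig_code (ltn_ord (p (o 0))) (ltn_ord (p (o 1))) (ltn_ord (p (o 2))) (ltn_ord (p (o 3))).
rewrite -/(phi p) => /(congr1 (fun s => nth 0 s j)).
rewrite (nth_map 0) ?size_iota // nth_iota // add0n => ->.
by case: j Hj => [|[|[|[|]]]].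
Qed.

Lemma forall4 (P : pred 'I_4) : [forall j, P j] = all (fun j => P (o j)) (iota 0 4).
Proof.
apply/forallP/allP => [H j _|H j]; first exact: H.
by have := H (val j); rewrite mem_iota ltn_ord /o inord_val => /(_ isT).
Qed.

Lemma gen_eq (sl : seq nat) (p q : {perm 'I_4}) : all (fun j => nth 0 sl j < 4) (iota 0 4) ->
  [forall j, q j == p (posmap sl j)] =
  all (fun j => dig (phi q) j == dig (phi p) (nth 0 sl j)) (iota 0 4).
Proof.
move=> /allP Hsl; rewrite forall4; apply: eq_in_all => j Hj.
have Hj4 : j < 4 by move: Hj; rewrite mem_iota.
rewrite dig_phi // dig_phi ?Hsl // /posmap /o inordK //.
Qed.

Lemma adj_code p q : S42_adj p q = e_code (phi p) (phi q).
Proof.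
rewrite /S42_adj /e_code /g12 /g3p /g3m /g4p /g4m /=.
by rewrite !gen_eq.
Qed.

Lemma Vlit_size : size Vlit = 24. Proof. by vm_compute. Qed.
Lemma Vlit_uniq : uniq Vlit. Proof. by vm_compute. Qed.
Lemma Vlit_code : all (fun n => code (dig n 0) (dig n 1) (dig n 2) (dig n 3) == n) Vlit.
Proof. by vm_compute. Qed.
Lemma Vlit_sym : all (fun n => all (fun m => e_code n m == e_code m n) Vlit) Vlit.
Proof. by vm_compute. Qed.

Lemma phi_in p : phi p \in Vlit.
Proof.
rewrite mem_filter mem_iota; apply/andP; split; last first.
  rewrite /phi /code; have := ltn_ord (p (o 0)); have := ltn_ord (p (o 1));
  have := ltn_ord (p (o 2)); have := ltn_ord (p (o 3)); lia.
rewrite (_ : map _ _ = map (fun j => val (p (o j))) (iota 0 4)); last first.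
  by apply/eq_in_map => j; rewrite mem_iota => /andP [_ Hj]; rewrite dig_phi.
rewrite map_inj_in_uniq ?iota_uniq // => i j; rewrite !mem_iota => /andP [_ Hi] /andP [_ Hj].
move=> /val_inj /perm_inj /(congr1 (@nat_of_ord 4)); rewrite /o !inordK //.
Qed.

Lemma phi_inj : injective phi.
Proof.
move=> p q H; apply/permP => x; apply: val_inj.
have := dig_phi p (ltn_ord x); have := dig_phi q (ltn_ord x).
rewrite /o inord_val H => Hq Hp; exact: (etrans (esym Hp) Hq).
Qed.

Lemma phi_surj m : m \in Vlit -> exists p, phi p = m.
Proof.
move=> Hm; have Hc := allP Vlit_code m Hm.
move: Hm; rewrite mem_filter => /andP [Hu _].
pose f := [ffun j : 'I_4 => o (dig m j)].
have Hd : forall j, dig m j < 4 by move=> j; rewrite /dig ltn_mod.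
have finj : injective f.
  move=> i j; rewrite !ffunE => /(congr1 (@nat_of_ord 4)); rewrite /o !inordK // => Hij.
  apply: val_inj => /=.
  have := nth_uniq 0 (_ : i < size (map (dig m) (iota 0 4))) (_ : j < size (map (dig m) (iota 0 4))) Hu.
  rewrite !size_map !size_iota !ltn_ord => /(_ isT isT).
  by rewrite !(nth_map 0) ?size_iota ?ltn_ord // !nth_iota ?ltn_ord // !add0n Hij eqxx => /esym/eqP.
exists (perm finj).
have Hp : forall j, j < 4 -> nat_of_ord (perm finj (o j)) = dig m j.
  move=> j Hj; rewrite permE ffunE /o inordK ?Hd // inordK //.
by rewrite /phi !Hp //; apply/eqP.
Qed.

Lemma Hcam24 : forall x, x < 24 -> size (nth [::] cam x) = 24.
Proof.
have H : all (fun x => size (nth [::] cam x) == 24) (iota 0 24) by vm_compute.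
by move=> x Hx; apply/eqP; apply: (allP H); rewrite mem_iota.
Qed.

Lemma cam_ok : all (fun i => all (fun j => e cam i j ==> (i == j) || e_code (nth 0 Vlit i) (nth 0 Vlit j)) (iota 0 24)) (iota 0 24).
Proof. by vm_compute. Qed.

Definition Pm (i : nat) : {perm 'I_4} := odflt 1%g [pick p | phi p == nth 0 Vlit i].

Lemma Pm_spec i : i < 24 -> phi (Pm i) = nth 0 Vlit i.
Proof.
move=> Hi; rewrite /Pm; case: pickP => [p /eqP //|H]; exfalso.
have Hin : nth 0 Vlit i \in Vlit by apply: mem_nth; rewrite Vlit_size.
have [p Hp] := phi_surj Hin.
by move: (H p); rewrite Hp eqxx.
Qed.

Lemma main_gen l k : 0 < l -> k + l <= 24 -> chk 24 cam l (iota 0 24) k 1 -> k < kappa S42_adj l.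
Proof.
move=> Hl Hkl Hchk.
have H24 : #|{perm 'I_4}| = 24 by rewrite card_Sn.
rewrite /kappa; apply: (big_ind (fun x => k < x)).
- by rewrite H24; lia.
- by move=> x y Hx Hy; rewrite leq_min Hx Hy.
move=> S HS; rewrite ltnNge; apply/negP => HSk.
move: HS; rewrite /lcut => /orP [Hc|Hc]; last first.
  by have := cardsC S; rewrite H24; lia.
set D := del_rel S42_adj S.
pose comp := fun x => [set y | (y \notin S) && connect D x y].
pose Lc := enum (components S42_adj S).
pose c := fun p => index (comp p) Lc.
apply: (@chk_sound 24 cam Hcam24 l (iota 0 24) k 1 Hchk predT _ (fun i => Pm i \in S) (fun i => c (Pm i))).
- by rewrite filter_predT.
- apply: leq_trans HSk.
  rewrite -size_filter cardE -(size_map Pm); apply: uniq_leq_size.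
    rewrite map_inj_in_uniq ?filter_uniq ?iota_uniq // => i j.
    rewrite !mem_filter !mem_iota => /andP [_ /andP [_ Hi]] /andP [_ /andP [_ Hj]] Heq.
    have := Pm_spec Hi; have := Pm_spec Hj; rewrite Heq => -> /eqP.
    by rewrite eq_sym nth_uniq ?Vlit_size ?Vlit_uniq // => /eqP.
  by move=> x /mapP [i]; rewrite mem_filter => /andP [HiS _] ->; rewrite mem_enum.
- move=> i Hi.
  have HiL : i < size Lc by rewrite /Lc -cardE; lia.
  have : nth set0 Lc i \in components S42_adj S by rewrite -mem_enum; exact: mem_nth.
  case/imsetP => x Hx HK.
  have Hci : c x = i.
    rewrite /c (_ : comp x = nth set0 Lc i); last by rewrite HK.
    by rewrite index_uniq // enum_uniq.
  have Hxin := phi_in x.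
  set m := index (phi x) Vlit.
  have Hm : m < 24 by rewrite -Vlit_size index_mem.
  have HPm : Pm m = x by apply: phi_inj; rewrite Pm_spec // nth_index.
  rewrite -has_count; apply/hasP; exists m; first by rewrite mem_iota.
  by move: Hx; rewrite inE /= HPm Hci eqxx andbT.
- move=> i j; rewrite !mem_iota => /andP [_ Hi] /andP [_ Hj] HSi HSj He.
  have Hi' : i \in iota 0 24 by rewrite mem_iota.
  have Hj' : j \in iota 0 24 by rewrite mem_iota.
  have := allP (allP cam_ok i Hi') j Hj'.
  rewrite He /= => /orP [/eqP -> //|Hec].
  rewrite -(Pm_spec Hi) -(Pm_spec Hj) -adj_code in Hec.
  have Hec' : S42_adj (Pm j) (Pm i).
    rewrite adj_code; have := allP (allP Vlit_sym _ (phi_in (Pm i))) _ (phi_in (Pm j)).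
    by move/eqP <-; rewrite -adj_code.
  have Dij : D (Pm i) (Pm j) by rewrite /D /del_rel HSi HSj Hec.
  have Dji : D (Pm j) (Pm i) by rewrite /D /del_rel HSi HSj Hec'.
  rewrite /c (_ : comp (Pm i) = comp (Pm j)) //.
  apply/setP => z; rewrite !inE; case: (z \in S) => //=.
  apply/idP/idP => H.
    exact: connect_trans (connect1 Dji) H.
  exact: connect_trans (connect1 Dij) H.
Qed.

Lemma chk4 : chk 24 cam 4 (iota 0 24) 9 1.
Proof. vm_cast_no_check (erefl true). Qed.

Lemma chk5 : chk 24 cam 5 (iota 0 24) 11 1.
Proof. vm_cast_no_check (erefl true). Qed.

Theorem lemma19 :
  10 <= kappa S42_adj 4 /\ 12 <= kappa S42_adj 5.
Proof.
split; [exact: (main_gen (isT : 0 < 4) (isT : 9 + 4 <= 24) chk4)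
       |exact: (main_gen (isT : 0 < 5) (isT : 11 + 5 <= 24) chk5)].
Qed.
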